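(* Let $a_i,b_i,a'_i,b'_i\ge 0$ ($i=1,2$), $v_1=(a'_1-a_1,b'_1-b_1)$, $v_2=(a'_2-a_2,b'_2-b_2)$, with $-1<\frac{b'_1-b_1}{a'_1-a_1}<0$ and $\frac{b'_2-b_2}{a'_2-a_2}<-1$, and fix $\epsilon\in(0,1)$. Let $A$ be the intersection point of $x^{a'_1-a_1}y^{b'_1-b_1}=\epsilon^2$ and $x^{a'_2-a_2}y^{b'_2-b_2}=\epsilon^{-2}$, and $D$ the intersection point of $x^{a'_1-a_1}y^{b'_1-b_1}=\epsilon^2$ and $x^{a'_2-a_2}y^{b'_2-b_2}=\epsilon^{2}$. Let $\mathbf{x}(t)$ be the solution with $\mathbf{x}(0)=D$ of $$\begin{pmatrix}\dot x\\ \dot y\end{pmatrix}=\big(\epsilon x^{a_1}y^{b_1}-\tfrac1\epsilon x^{a'_1}y^{b'_1}\big)v_1+\big(\tfrac1\epsilon x^{a_2}y^{b_2}-\epsilon x^{a'_2}y^{b'_2}\big)v_2,$$ which converges to $A$, and let $J$ be the Jacobian matrix of this vector field at $A$. Then $\mathbf{x}(t)$ approaches $A$ along the slower eigendirection of $J$, i.e. the eigendirection corresponding to the eigenvalue of smaller magnitude.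
   Context: This is the mass-action system of the network $a_1X+b_1Y\rightleftharpoons a'_1X+b'_1Y$, $a_2X+b_2Y\rightleftharpoons a'_2X+b'_2Y$ with constant rate constants $k_1=\epsilon,k_2=1/\epsilon,k_3=1/\epsilon,k_4=\epsilon$, for which $A$ is the detailed balanced positive equilibrium. *)

(* Defs.v *)
From Stdlib Require Import Reals.
From Coquelicot Require Import Coquelicot.
Open Scope R_scope.

Definition mono (x y p q : R) : R := Rpower x p * Rpower y q.

Definition rate1 (eps a1 b1 a1' b1' x y : R) : R :=
  eps * mono x y a1 b1 - / eps * mono x y a1' b1'.

Definition rate2 (eps a2 b2 a2' b2' x y : R) : R :=
  / eps * mono x y a2 b2 - eps * mono x y a2' b2'.

Definition fieldX (a1 b1 a1' b1' a2 b2 a2' b2' eps x y : R) : R :=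
  rate1 eps a1 b1 a1' b1' x y * (a1' - a1) + rate2 eps a2 b2 a2' b2' x y * (a2' - a2).

Definition fieldY (a1 b1 a1' b1' a2 b2 a2' b2' eps x y : R) : R :=
  rate1 eps a1 b1 a1' b1' x y * (b1' - b1) + rate2 eps a2 b2 a2' b2' x y * (b2' - b2).

(* Main.v *)
Require Import Defs.
From Stdlib Require Import Reals Lra Psatz Classical.
From Coquelicot Require Import Coquelicot.
Open Scope R_scope.
Ltac neq := first [apply Rgt_not_eq; lra | apply Rlt_not_eq; lra | lra].

Section FL.
Context {T : Type} {F : (T -> Prop) -> Prop} {FF : Filter F}.

Lemma fl_const (c : R) : filterlim (fun _ : T => c) F (locally c).
Proof. apply filterlim_const. Qed.

Lemma fl_plus (f g : T -> R) a b : filterlim f F (locally a) -> filterlim g F (locally b) ->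
  filterlim (fun t => f t + g t) F (locally (a + b)).
Proof. intros Hf Hg. eapply filterlim_comp_2; [exact Hf|exact Hg|]. apply (filterlim_plus a b). Qed.

Lemma fl_mult (f g : T -> R) a b : filterlim f F (locally a) -> filterlim g F (locally b) ->
  filterlim (fun t => f t * g t) F (locally (a * b)).
Proof. intros Hf Hg. eapply filterlim_comp_2; [exact Hf|exact Hg|]. apply (filterlim_mult a b). Qed.

Lemma fl_comp (f : T -> R) (g : R -> R) a : filterlim f F (locally a) -> continuous g a ->
  filterlim (fun t => g (f t)) F (locally (g a)).
Proof. intros Hf Hg. eapply filterlim_comp; [exact Hf|exact Hg]. Qed.

Lemma fl_opp (f : T -> R) a : filterlim f F (locally a) -> filterlim (fun t => - f t) F (locally (- a)).
Proof. intros Hf. apply (fl_comp f Ropp a Hf). apply (continuous_opp (fun x : R => x)), continuous_id. Qed.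

Lemma fl_minus (f g : T -> R) a b : filterlim f F (locally a) -> filterlim g F (locally b) ->
  filterlim (fun t => f t - g t) F (locally (a - b)).
Proof. intros Hf Hg. apply fl_plus; [exact Hf| now apply fl_opp]. Qed.

Lemma fl_inv (f : T -> R) a : filterlim f F (locally a) -> a <> 0 -> filterlim (fun t => / f t) F (locally (/ a)).
Proof. intros Hf Ha. apply (fl_comp f Rinv a Hf). now apply continuous_Rinv. Qed.

Lemma fl_div (f g : T -> R) a b : filterlim f F (locally a) -> filterlim g F (locally b) -> b <> 0 ->
  filterlim (fun t => f t / g t) F (locally (a / b)).
Proof. intros. apply fl_mult; auto. now apply fl_inv. Qed.

Lemma fl_ln (f : T -> R) a : filterlim f F (locally a) -> 0 < a -> filterlim (fun t => ln (f t)) F (locally (ln a)).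
Proof. intros Hf Ha. apply (fl_comp f ln a Hf). now apply continuous_ln. Qed.

Lemma fl_exp (f : T -> R) a : filterlim f F (locally a) -> filterlim (fun t => exp (f t)) F (locally (exp a)).
Proof. intros Hf. apply (fl_comp f exp a Hf). apply continuous_exp. Qed.

Lemma fl_sqrt (f : T -> R) a : filterlim f F (locally a) -> filterlim (fun t => sqrt (f t)) F (locally (sqrt a)).
Proof. intros Hf. apply (fl_comp f sqrt a Hf). apply continuous_sqrt. Qed.

Lemma fl_Rpower (f : T -> R) a c : filterlim f F (locally a) -> 0 < a ->
  filterlim (fun t => Rpower (f t) c) F (locally (Rpower a c)).
Proof. intros Hf Ha. unfold Rpower. apply fl_exp. apply fl_mult. apply fl_const. now apply fl_ln. Qed.

Lemma fl_pow2 (f : T -> R) a : filterlim f F (locally a) -> filterlim (fun t => f t ^ 2) F (locally (a ^ 2)).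
Proof. intros Hf. simpl. apply fl_mult; auto. rewrite Rmult_1_r. eapply filterlim_ext. 2: exact Hf. intros; simpl; ring. Qed.

End FL.

Definition hf (z : R) : R := if Req_EM_T z 0 then 1 else (exp z - 1) / z.

Lemma hf_spec z : exp z - 1 = hf z * z.
Proof. unfold hf. destruct (Req_EM_T z 0). subst. rewrite exp_0. ring. field. auto. Qed.

Lemma hf_0 : hf 0 = 1.
Proof. unfold hf. destruct (Req_EM_T 0 0); [auto| congruence]. Qed.

Lemma hf_pos z : 0 < hf z.
Proof.
  unfold hf. destruct (Req_EM_T z 0). lra.
  destruct (Rlt_or_le 0 z).
  - apply Rdiv_lt_0_compat; auto. assert (1 + z <= exp z) by apply exp_ineq1_le. lra.
  - assert (z < 0) by lra. assert (1 + z <= exp z) by apply exp_ineq1_le.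
    assert (exp z < exp 0) by (apply exp_increasing; lra). rewrite exp_0 in H2.
    replace ((exp z - 1)/z) with ((1 - exp z) / (- z)) by (field; auto).
    apply Rdiv_lt_0_compat; lra.
Qed.

Lemma hf_le z : hf z <= 1 + exp z.
Proof.
  unfold hf. destruct (Req_EM_T z 0). pose proof (exp_pos z). lra.
  destruct (Rlt_or_le 0 z).
  - (* e^z - 1 <= z e^z *)
    assert (1 - z <= exp (-z)) by (pose proof (exp_ineq1_le (-z)); lra).
    assert (exp z * exp (-z) = 1) by (rewrite <- exp_plus; replace (z + -z) with 0 by ring; apply exp_0).
    pose proof (exp_pos z).
    apply Rle_trans with (exp z). 2: lra.
    apply Rmult_le_reg_r with z; auto. unfold Rdiv. rewrite Rmult_assoc, Rinv_l by auto.
    nra.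
  - assert (z < 0) by lra. assert (1 + z <= exp z) by apply exp_ineq1_le.
    pose proof (exp_pos z).
    replace ((exp z - 1)/z) with ((1 - exp z) / (- z)) by (field; auto).
    apply Rle_trans with 1. 2: lra.
    apply Rmult_le_reg_r with (-z). lra. unfold Rdiv. rewrite Rmult_assoc, Rinv_l by lra. lra.
Qed.

Lemma hf_cont z : continuous hf z.
Proof.
  destruct (Req_EM_T z 0) as [->|Hz].
  - apply continuity_pt_filterlim. intros eps Heps.
    destruct (derivable_pt_lim_exp_0 eps Heps) as [d Hd].
    exists d. split. apply cond_pos. intros y [_ Hy]. simpl in Hy. unfold R_dist in Hy |- *.
    rewrite hf_0. unfold hf. destruct (Req_EM_T y 0). simpl; unfold R_dist; rewrite Rminus_diag, Rabs_R0; auto. simpl; unfold R_dist.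
    rewrite Rminus_0_r in Hy. specialize (Hd y n Hy). rewrite Rplus_0_l, exp_0 in Hd. exact Hd.
  - apply continuous_ext_loc with (g := fun y => (exp y - 1) * / y).
    + assert (Hp : 0 < Rabs z) by (apply Rabs_pos_lt; auto).
      exists (mkposreal _ Hp). intros y Hy. unfold hf. destruct (Req_EM_T y 0). 2: reflexivity.
      exfalso. subst. cbn in Hy. unfold AbsRing_ball, abs, minus, plus, opp in Hy. simpl in Hy.
      rewrite Rplus_0_l, Rabs_Ropp in Hy. lra.
    + unfold continuous. apply (fl_mult (fun y => exp y - 1) (fun y => / y)).
      apply fl_minus. apply (fl_exp (fun y => y)). apply continuous_id. apply fl_const.
      apply (fl_inv (fun y => y)). apply continuous_id. auto.
Qed.

Lemma fl_hf {T} {F : (T -> Prop) -> Prop} {FF : Filter F} (f : T -> R) a :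
  filterlim f F (locally a) -> filterlim (fun t => hf (f t)) F (locally (hf a)).
Proof. intros Hf. apply (fl_comp f hf a Hf). apply hf_cont. Qed.

Lemma fl_id {T} {F : (T -> Prop) -> Prop} (f : T -> R) a : filterlim f F (locally a) -> filterlim (fun t => f t) F (locally a).
Proof. auto. Qed.

Ltac lim_step :=
  match goal with
  | |- filterlim (fun t => @?f t - @?g t) _ _ => apply (fl_minus f g)
  | |- filterlim (fun t => @?f t + @?g t) _ _ => apply (fl_plus f g)
  | |- filterlim (fun t => @?f t / @?g t) _ _ => apply (fl_div f g)
  | |- filterlim (fun t => @?f t * @?g t) _ _ => apply (fl_mult f g)
  | |- filterlim (fun t => - @?f t) _ _ => apply (fl_opp f)
  | |- filterlim (fun t => / @?f t) _ _ => apply (fl_inv f)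
  | |- filterlim (fun t => ln (@?f t)) _ _ => apply (fl_ln f)
  | |- filterlim (fun t => exp (@?f t)) _ _ => apply (fl_exp f)
  | |- filterlim (fun t => hf (@?f t)) _ _ => apply (fl_hf f)
  | |- filterlim (fun t => sqrt (@?f t)) _ _ => apply (fl_sqrt f)
  | |- filterlim (fun t => Rpower (@?f t) _) _ _ => apply (fl_Rpower f)
  | |- filterlim (fun t => (@?f t) ^ 2) _ _ => apply (fl_pow2 f)
  | |- filterlim (fun t => ?c) _ _ => apply fl_const
  end.
Ltac lim_tac := repeat lim_step.

Lemma is_derive_lin (f : R -> R) t l c k : is_derive f t l -> is_derive (fun s => c + k * f s) t (k * l).
Proof.
  intros H. apply is_derive_Reals. apply is_derive_Reals in H.
  replace (k * l) with (0 + k * l) by ring.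
  apply (derivable_pt_lim_plus (fun _ => c) (fun s => k * f s)).
  apply derivable_pt_lim_const. apply derivable_pt_lim_scal. exact H.
Qed.

Lemma deriv_cont (f : R -> R) s l : is_derive f s l -> continuity_pt f s.
Proof.
  intros H. apply continuity_pt_filterlim. apply (ex_derive_continuous f s). exists l; exact H.
Qed.

Lemma cont_eps (f : R -> R) s : continuity_pt f s -> forall e, 0 < e ->
  exists d, 0 < d /\ forall x, Rabs (x - s) < d -> Rabs (f x - f s) < e.
Proof.
  intros Hc e He. destruct (Hc e He) as [d [Hd H]]. exists d; split; auto.
  intros x Hx. destruct (Req_dec x s) as [->|Hne].
  - rewrite Rminus_diag, Rabs_R0; auto.
  - apply (H x). split. split. exact I. auto. exact Hx.
Qed.

Lemma left_decr (f : R -> R) m l : is_derive f m l -> l < 0 ->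
  exists d, 0 < d /\ forall h, 0 < h < d -> f m < f (m - h).
Proof.
  intros Hd Hl. apply is_derive_Reals in Hd.
  destruct (Hd (- l / 2)) as [d Hdd]. lra.
  exists d. split. apply cond_pos. intros h Hh.
  assert (Hne : - h <> 0) by lra. assert (Hab : Rabs (- h) < d) by (rewrite Rabs_Ropp, Rabs_pos_eq; lra).
  specialize (Hdd _ Hne Hab). replace (m + - h) with (m - h) in Hdd by ring.
  apply Rabs_def2 in Hdd. destruct Hdd as [H1 H2].
  assert (Hq : (f (m - h) - f m) / - h < l / 2) by lra.
  assert (Hq2 : (f (m - h) - f m) = ((f (m - h) - f m) / - h) * (- h)) by (field; lra).
  nra.
Qed.

Lemma mvt_lower (f df : R -> R) t1 t2 m : t1 <= t2 ->
  (forall s, t1 <= s <= t2 -> is_derive f s (df s)) ->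
  (forall s, t1 <= s <= t2 -> m <= df s) -> m * (t2 - t1) <= f t2 - f t1.
Proof.
  intros Hle Hd Hm.
  destruct (MVT_gen f t1 t2 df) as [c [Hc Heq]].
  - intros x Hx. rewrite Rmin_left, Rmax_right in Hx by lra. apply Hd; lra.
  - intros x Hx. rewrite Rmin_left, Rmax_right in Hx by lra. eapply deriv_cont, Hd; lra.
  - rewrite Rmin_left, Rmax_right in Hc by lra. rewrite Heq. apply Rmult_le_compat_r. lra. apply Hm; lra.
Qed.

Lemma mvt_upper (f df : R -> R) t1 t2 m : t1 <= t2 ->
  (forall s, t1 <= s <= t2 -> is_derive f s (df s)) ->
  (forall s, t1 <= s <= t2 -> df s <= m) -> f t2 - f t1 <= m * (t2 - t1).
Proof.
  intros Hle Hd Hm.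
  destruct (MVT_gen f t1 t2 df) as [c [Hc Heq]].
  - intros x Hx. rewrite Rmin_left, Rmax_right in Hx by lra. apply Hd; lra.
  - intros x Hx. rewrite Rmin_left, Rmax_right in Hx by lra. eapply deriv_cont, Hd; lra.
  - rewrite Rmin_left, Rmax_right in Hc by lra. rewrite Heq. apply Rmult_le_compat_r. lra. apply Hm; lra.
Qed.

Lemma barrier (f df : R -> R) t1 t2 : t1 <= t2 ->
  (forall s, t1 <= s <= t2 -> is_derive f s (df s)) -> f t1 <= 0 ->
  (forall s, t1 < s <= t2 -> 0 < f s -> df s < 0) -> f t2 <= 0.
Proof.
  intros Hle Hd H1 Hs.
  destruct (continuity_ab_maj f t1 t2 Hle) as [M [HM HMi]].
  { intros c Hc. eapply deriv_cont, Hd; lra. }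
  destruct (Rle_or_lt (f t2) 0) as [|Hpos]; auto. exfalso.
  assert (HfM : 0 < f M) by (specialize (HM t2); lra).
  assert (HM1 : t1 < M) by (destruct (Req_dec M t1); [subst; lra| lra]).
  assert (Hneg : df M < 0) by (apply Hs; lra).
  destruct (left_decr f M (df M) (Hd M HMi) Hneg) as [d [Hd0 Hdd]].
  set (h := Rmin (d / 2) ((M - t1) / 2)).
  assert (Hh : 0 < h < d) by (unfold h; split; [apply Rmin_glb_lt; lra| eapply Rle_lt_trans; [apply Rmin_l| lra]]).
  assert (Hh2 : h <= (M - t1) / 2) by apply Rmin_r.
  specialize (Hdd h Hh). specialize (HM (M - h)). lra.
Qed.

Lemma left_sign (f : R -> R) s t1 : continuity_pt f s -> t1 < s ->
  (forall q, t1 <= q < s -> 0 < f q) -> 0 <= f s.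
Proof.
  intros Hc Hs Hq. destruct (Rle_or_lt 0 (f s)) as [|Hn]; auto. exfalso.
  destruct (cont_eps f s Hc (- f s / 2)) as [d [Hd Hdd]]. lra.
  set (q := Rmax t1 (s - d / 2)).
  assert (t1 <= q < s) by (unfold q; split; [apply Rmax_l| apply Rmax_lub_lt; lra]).
  assert (s - d/2 <= q) by apply Rmax_r.
  specialize (Hdd q). specialize (Hq q H).
  assert (Rabs (q - s) < d) by (rewrite Rabs_left by lra; lra).
  specialize (Hdd H1). apply Rabs_def2 in Hdd. lra.
Qed.

Lemma invariance (P Q dP dQ : R -> R) t1 :
  (forall s, t1 <= s -> is_derive P s (dP s) /\ is_derive Q s (dQ s)) ->
  0 < P t1 -> Q t1 < 0 ->
  (forall s, t1 <= s -> 0 < P s -> Q s = 0 -> dQ s < 0) ->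
  (forall T, exists K, forall s, t1 <= s <= T -> 0 <= P s -> Q s <= 0 -> - K * P s <= dP s) ->
  forall t, t1 <= t -> 0 < P t /\ Q t < 0.
Proof.
  intros Hd HP1 HQ1 HQ HK t2 Ht2.
  destruct (HK t2) as [K HKb].
  set (E := fun r => t1 <= r <= t2 /\ forall q, t1 <= q <= r -> 0 < P q /\ Q q < 0).
  assert (HE1 : E t1) by (split; [lra| intros q Hq; replace q with t1 by lra; auto]).
  assert (Hb : bound E) by (exists t2; intros r [Hr _]; lra).
  destruct (completeness E Hb (ex_intro _ t1 HE1)) as [s [Hub Hlub]].
  assert (Hs1 : t1 <= s) by (apply Hub; auto).
  assert (Hs2 : s <= t2) by (apply Hlub; intros r [Hr _]; lra).
  assert (Hbefore : forall q, t1 <= q < s -> 0 < P q /\ Q q < 0).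
  { intros q Hq. destruct (classic (exists r, E r /\ q < r)) as [[r [[_ Hr] Hqr]]|Hno].
    - apply Hr; lra.
    - exfalso. assert (s <= q). apply Hlub. intros r Er. destruct (Rle_or_lt r q); auto. exfalso; apply Hno; eauto.
      lra. }
  assert (HcP : forall r, t1 <= r -> continuity_pt P r) by (intros r Hr; eapply deriv_cont, (proj1 (Hd r Hr))).
  assert (HcQ : forall r, t1 <= r -> continuity_pt Q r) by (intros r Hr; eapply deriv_cont, (proj2 (Hd r Hr))).
  assert (HPs : 0 <= P s /\ Q s <= 0).
  { destruct (Req_dec s t1) as [->|Hne]. lra.
    split. apply (left_sign P s t1); auto. lra. intros q Hq; apply Hbefore; auto.
    assert (0 <= - Q s). apply (left_sign (fun r => - Q r) s t1); auto.
    apply continuity_pt_opp; auto. lra. intros q Hq; specialize (Hbefore q Hq); lra. lra. }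
  assert (HPpos : 0 < P s).
  { set (g := fun r => P r * exp (K * r)).
    assert (Hg : 0 * (s - t1) <= g s - g t1).
    { apply (mvt_lower g (fun r => (dP r + K * P r) * exp (K * r))).
      - lra.
      - intros r Hr. unfold g. replace ((dP r + K * P r) * exp (K * r)) with
          (dP r * exp (K * r) + P r * (K * exp (K * r))) by ring.
        assert (He : is_derive (fun r => exp (K * r)) r (K * exp (K * r))).
        { auto_derive. auto. ring. }
        pose proof (is_derive_mult P (fun r => exp (K * r)) r (dP r) (K * exp (K * r)) (proj1 (Hd r ltac:(lra))) He Rmult_comm) as Hm.
        exact Hm.
      - intros r Hr. apply Rmult_le_pos. 2: left; apply exp_pos.
        assert (0 <= P r /\ Q r <= 0).
        { destruct (Req_dec r s) as [->|]; auto. specialize (Hbefore r); lra. }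
        specialize (HKb r). lra. }
    unfold g in Hg. pose proof (exp_pos (K * s)). pose proof (exp_pos (K * t1)).
    assert (0 < P t1 * exp (K * t1)) by (apply Rmult_lt_0_compat; auto).
    destruct HPs as [HPs _]. destruct HPs as [|HP0]; auto. rewrite <- HP0 in Hg. lra. }
  assert (HQneg : Q s < 0).
  { destruct HPs as [_ [|HQ0]]; auto. exfalso.
    assert (Hne : t1 < s) by (destruct (Req_dec s t1); [subst; lra| lra]).
    assert (Hneg : dQ s < 0) by (apply HQ; auto).
    destruct (left_decr Q s (dQ s) (proj2 (Hd s Hs1)) Hneg) as [d [Hd0 Hdd]].
    set (h := Rmin (d / 2) ((s - t1) / 2)).
    assert (Hh : 0 < h < d) by (unfold h; split; [apply Rmin_glb_lt; lra| eapply Rle_lt_trans; [apply Rmin_l| lra]]).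
    assert (Hh2 : h <= (s - t1) / 2) by apply Rmin_r.
    specialize (Hdd h Hh). specialize (Hbefore (s - h)). lra. }
  destruct (Req_dec s t2) as [<-|Hlt]. auto.
  exfalso.
  destruct (cont_eps P s (HcP s Hs1) (P s / 2)) as [d1 [Hd1 Hdd1]]. lra.
  destruct (cont_eps Q s (HcQ s Hs1) (- Q s / 2)) as [d2 [Hd2 Hdd2]]. lra.
  set (r := Rmin t2 (s + Rmin d1 d2 / 2)).
  assert (Hmin : 0 < Rmin d1 d2) by (apply Rmin_glb_lt; auto).
  assert (Hr1 : r <= t2) by apply Rmin_l.
  assert (Hr2 : r <= s + Rmin d1 d2 / 2) by apply Rmin_r.
  assert (Hr3 : s < r) by (unfold r; apply Rmin_glb_lt; lra).
  assert (E r).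
  { split. lra. intros q Hq. destruct (Rlt_or_le q s). apply Hbefore; lra.
    assert (Rabs (q - s) < d1) by (rewrite Rabs_pos_eq by lra; pose proof (Rmin_l d1 d2); lra).
    assert (Rabs (q - s) < d2) by (rewrite Rabs_pos_eq by lra; pose proof (Rmin_r d1 d2); lra).
    specialize (Hdd1 q H0). specialize (Hdd2 q H1). apply Rabs_def2 in Hdd1. apply Rabs_def2 in Hdd2. lra. }
  specialize (Hub r H). lra.
Qed.

Lemma lim_ev (f : R -> R) (l : R) : is_lim f p_infty l -> forall e, 0 < e ->
  exists M, forall t, M < t -> Rabs (f t - l) < e.
Proof.
  intros H e He. pose proof (proj2 (is_lim_spec f p_infty (Finite l)) H) as H'. destruct (H' (mkposreal e He)) as [M HM]. exists M. exact HM.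
Qed.

Lemma ev_lim (f : R -> R) (l : R) : (forall e, 0 < e -> exists M, forall t, M < t -> Rabs (f t - l) < e) ->
  is_lim f p_infty l.
Proof.
  intros H. apply (proj1 (is_lim_spec f p_infty (Finite l))). intros eps. destruct (H eps (cond_pos eps)) as [M HM]. exists M. exact HM.
Qed.

Lemma ric_below A C rs rf d m rho e0 e1 e2 eta :
  0 < A -> rs < 0 -> 0 < rf -> 0 < d -> 0 < m -> m <= 1 -> m <= rf ->
  A * (rho - rs) * (rho - rf) = C + (- A * (rs + rf)) * rho + A * rho ^ 2 ->
  rho < 0 -> rho <= rs - d ->
  Rabs e0 <= eta -> Rabs e1 <= eta -> Rabs e2 <= eta ->
  eta <= A * d * m / (1 + d - rs) / 2 ->
  A * d * m / (1 + d - rs) / 2 <= (C + e0) + ((- A * (rs + rf)) + e1) * rho + (A + e2) * rho ^ 2.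
Proof.
  intros HA Hrs Hrf Hd Hm Hm1 Hm2 Hfac Hr0 Hr HE0 HE1 HE2 Heta.
  set (k := A * d * m / (1 + d - rs)).
  assert (Hk : 0 < k) by (unfold k; apply Rdiv_lt_0_compat; [repeat apply Rmult_lt_0_compat; lra| lra]).
  assert (S1 : d * (1 - rho) <= (rs - rho) * (1 + d - rs)) by nra.
  assert (S2 : m * (1 - rho) <= rf - rho) by nra.
  assert (S3 : d * m * (1 - rho) ^ 2 <= (rs - rho) * (rf - rho) * (1 + d - rs)).
  { assert (0 <= d * (1 - rho)) by nra. assert (0 <= m * (1 - rho)) by nra.
    replace (d * m * (1 - rho) ^ 2) with ((d * (1 - rho)) * (m * (1 - rho))) by ring.
    replace ((rs - rho) * (rf - rho) * (1 + d - rs)) with (((rs - rho) * (1 + d - rs)) * (rf - rho)) by ring.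
    apply Rmult_le_compat; lra. }
  assert (S4 : k * (1 - rho + rho ^ 2) <= A * (rho - rs) * (rho - rf)).
  { assert (Hk2 : k * (1 + d - rs) = A * d * m) by (unfold k; field; neq).
    apply Rmult_le_reg_r with (1 + d - rs). lra.
    assert (EQ : k * (1 - rho + rho ^ 2) * (1 + d - rs) = A * (d * m * (1 - rho + rho ^ 2))).
    { replace (A * (d * m * (1 - rho + rho ^ 2))) with ((A * d * m) * (1 - rho + rho ^ 2)) by ring.
      rewrite <- Hk2. ring. }
    rewrite EQ.
    replace (A * (rho - rs) * (rho - rf) * (1 + d - rs)) with (A * ((rs - rho) * (rf - rho) * (1 + d - rs))) by ring.
    apply Rmult_le_compat_l. lra.
    assert (d * m * (1 - rho + rho^2) <= d * m * (1 - rho) ^ 2). 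
    { apply Rmult_le_compat_l. nra. nra. }
    lra. }
  apply Rabs_le_between in HE0. apply Rabs_le_between in HE1. apply Rabs_le_between in HE2.
  assert (E1 : - eta * (- rho) <= e1 * rho) by nra.
  assert (E2 : - eta * rho ^ 2 <= e2 * rho ^ 2) by nra.
  fold k in Heta. nra.
Qed.

Lemma ric_above A C rs rf d rho e0 e1 e2 eta :
  0 < A -> rs < 0 -> 0 < rf -> 0 < d ->
  A * (rho - rs) * (rho - rf) = C + (- A * (rs + rf)) * rho + A * rho ^ 2 ->
  rho < 0 -> rs + d <= rho ->
  Rabs e0 <= eta -> Rabs e1 <= eta -> Rabs e2 <= eta ->
  eta <= A * d * rf / (2 * (1 - rs + rs ^ 2)) ->
  (C + e0) + ((- A * (rs + rf)) + e1) * rho + (A + e2) * rho ^ 2 <= - (A * d * rf / 2).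
Proof.
  intros HA Hrs Hrf Hd Hfac Hr0 Hr HE0 HE1 HE2 Heta.
  assert (S1 : d * rf <= (rho - rs) * (rf - rho)) by nra.
  assert (S2 : A * (rho - rs) * (rho - rf) <= - (A * d * rf)) by nra.
  apply Rabs_le_between in HE0. apply Rabs_le_between in HE1. apply Rabs_le_between in HE2.
  assert (W : 0 < 1 - rs + rs ^ 2) by nra.
  assert (Heta2 : eta * (1 - rs + rs ^ 2) <= A * d * rf / 2).
  { apply Rmult_le_reg_r with (/ (1 - rs + rs^2)). apply Rinv_0_lt_compat; auto.
    rewrite Rmult_assoc, Rinv_r by lra. replace (A * d * rf / 2 * / (1 - rs + rs ^ 2)) with
    (A * d * rf / (2 * (1 - rs + rs ^ 2))) by (field; neq). lra. }
  assert (E1 : e1 * rho <= eta * (- rho)) by nra.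
  assert (E2 : e2 * rho ^ 2 <= eta * rho ^ 2) by nra.
  assert (E3 : eta * (1 - rho + rho^2) <= eta * (1 - rs + rs ^ 2)).
  { assert (0 <= eta) by (pose proof (Rabs_pos e0); lra). apply Rmult_le_compat_l; nra. }
  nra.
Qed.

Lemma riccati (rho drho k0 k1 k2 : R -> R) (A B C T0 : R) :
  0 < A -> C < 0 ->
  (forall t, T0 <= t -> is_derive rho t (drho t)) ->
  (forall t, T0 <= t -> rho t < 0) ->
  (forall t, T0 <= t -> drho t = k0 t + k1 t * rho t + k2 t * rho t ^ 2) ->
  is_lim k0 p_infty C -> is_lim k1 p_infty B -> is_lim k2 p_infty A ->
  is_lim rho p_infty ((- B - sqrt (B ^ 2 - 4 * A * C)) / (2 * A)).
Proof.
  intros HA HC Hd Hneg Heq L0 L1 L2.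
  set (D := B ^ 2 - 4 * A * C).
  assert (HD : 0 < D) by (unfold D; nra).
  set (sD := sqrt D).
  assert (HsD2 : sD * sD = D) by (apply sqrt_sqrt; lra).
  assert (HsD0 : 0 <= sD) by apply sqrt_pos.
  assert (HsDB : B < sD /\ - B < sD) by (unfold D in HsD2; split; nra).
  set (rs := (- B - sD) / (2 * A)). set (rf := (- B + sD) / (2 * A)).
  assert (Hrs : rs < 0) by (unfold rs; apply Rdiv_neg_pos; lra).
  assert (Hrf : 0 < rf) by (unfold rf; apply Rdiv_lt_0_compat; lra).
  assert (HB : B = - A * (rs + rf)) by (unfold rs, rf; field; neq).
  assert (Hprod : A * rs * rf = C).
  { unfold rs, rf. replace (A * ((- B - sD) / (2 * A)) * ((- B + sD) / (2 * A))) with ((B * B - sD * sD) / (4 * A)) by (field; neq).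
    rewrite HsD2. unfold D. field. neq. }
  assert (Hfac : forall r, A * (r - rs) * (r - rf) = C + (- A * (rs + rf)) * r + A * r ^ 2).
  { intros r. rewrite <- Hprod. ring. }
  apply ev_lim. intros eps Heps.
  set (d := Rmin (eps / 2) (- rs / 2)).
  assert (Hd0 : 0 < d) by (unfold d; apply Rmin_glb_lt; lra).
  assert (Hd1 : d <= eps / 2) by apply Rmin_l.
  set (m := Rmin 1 rf).
  assert (Hm0 : 0 < m) by (unfold m; apply Rmin_glb_lt; lra).
  assert (Hm1 : m <= 1) by apply Rmin_l. assert (Hm2 : m <= rf) by apply Rmin_r.
  set (kb := A * d * m / (1 + d - rs) / 2).
  assert (Hadm : 0 < A * d * m) by (apply Rmult_lt_0_compat; [apply Rmult_lt_0_compat|]; lra).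
  assert (Hkb : 0 < kb) by (unfold kb; apply Rdiv_lt_0_compat; [apply Rdiv_lt_0_compat; lra| lra]).
  set (ka := A * d * rf / (2 * (1 - rs + rs ^ 2))).
  assert (Hadr : 0 < A * d * rf) by (apply Rmult_lt_0_compat; [apply Rmult_lt_0_compat|]; lra).
  assert (Hka : 0 < ka). { unfold ka. apply Rdiv_lt_0_compat. lra. pose proof (pow2_ge_0 rs). lra. }
  set (eta := Rmin kb ka).
  assert (Heta0 : 0 < eta) by (unfold eta; apply Rmin_glb_lt; auto).
  assert (Heta1 : eta <= kb) by apply Rmin_l. assert (Heta2 : eta <= ka) by apply Rmin_r.
  set (cu := A * d * rf / 2).
  assert (Hcu : 0 < cu) by (unfold cu; apply Rdiv_lt_0_compat; lra).
  destruct (lim_ev k0 C L0 eta Heta0) as [M0 HM0].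
  destruct (lim_ev k1 B L1 eta Heta0) as [M1 HM1].
  destruct (lim_ev k2 A L2 eta Heta0) as [M2 HM2].
  set (T1 := Rmax T0 (Rmax M0 (Rmax M1 M2)) + 1).
  assert (HT1 : T0 < T1 /\ M0 < T1 /\ M1 < T1 /\ M2 < T1).
  { unfold T1. pose proof (Rmax_l T0 (Rmax M0 (Rmax M1 M2))). pose proof (Rmax_r T0 (Rmax M0 (Rmax M1 M2))).
    pose proof (Rmax_l M0 (Rmax M1 M2)). pose proof (Rmax_r M0 (Rmax M1 M2)).
    pose proof (Rmax_l M1 M2). pose proof (Rmax_r M1 M2). lra. }
  assert (Hform : forall t, T1 <= t -> exists e0 e1 e2, Rabs e0 <= eta /\ Rabs e1 <= eta /\ Rabs e2 <= eta /\
     drho t = (C + e0) + ((- A * (rs + rf)) + e1) * rho t + (A + e2) * rho t ^ 2).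
  { intros t Ht. exists (k0 t - C), (k1 t - B), (k2 t - A).
    split. left; apply HM0; lra. split. left; apply HM1; lra. split. left; apply HM2; lra.
    rewrite Heq by lra. rewrite <- HB. ring. }
  assert (Hbelow : forall t, T1 <= t -> rho t <= rs - d -> kb <= drho t).
  { intros t Ht Hr. destruct (Hform t Ht) as [e0 [e1 [e2 [H0 [H1 [H2 ->]]]]]].
    apply (ric_below A C rs rf d m (rho t) e0 e1 e2 eta); auto; apply Hneg; lra. }
  assert (Habove : forall t, T1 <= t -> rs + d <= rho t -> drho t <= - cu).
  { intros t Ht Hr. destruct (Hform t Ht) as [e0 [e1 [e2 [H0 [H1 [H2 ->]]]]]].
    apply (ric_above A C rs rf d (rho t) e0 e1 e2 eta); auto; apply Hneg; lra. }
  assert (Hder : forall a b, T1 <= a -> forall s, a <= s <= b -> is_derive rho s (drho s)).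
  { intros a b Ha s Hs. apply Hd. lra. }
  assert (S1 : exists t2, T1 <= t2 /\ rs - d <= rho t2).
  { apply NNPP. intros Hno.
    assert (Hall : forall t, T1 <= t -> rho t < rs - d).
    { intros t Ht. destruct (Rlt_or_le (rho t) (rs - d)); auto. exfalso; apply Hno; eauto. }
    set (t := T1 + (- rho T1) / kb + 1).
    assert (Hpos : 0 <= (- rho T1) / kb) by (apply Rdiv_le_0_compat; [pose proof (Hneg T1); lra| lra]).
    assert (kb * (t - T1) <= rho t - rho T1).
    { apply (mvt_lower rho drho T1 t kb). unfold t; lra. apply Hder; lra.
      intros s Hs. apply Hbelow. lra. left; apply Hall; lra. }
    assert (kb * (t - T1) = - rho T1 + kb) by (unfold t; field; neq).
    pose proof (Hneg t). assert (T0 <= t) by (unfold t; lra). lra. }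
  destruct S1 as [t2 [Ht2 Hr2]].
  assert (S3 : forall t, t2 <= t -> rs - d <= rho t).
  { intros t Ht. assert (rs - d - rho t <= 0); [| lra].
    replace (rs - d - rho t) with ((rs - d) + (-1) * rho t) by ring.
    apply (barrier (fun s => (rs - d) + (-1) * rho s) (fun s => (-1) * drho s) t2 t Ht).
    - intros s Hs. apply is_derive_lin. apply Hd; lra.
    - lra.
    - intros s Hs Hp. pose proof (Hbelow s ltac:(lra) ltac:(lra)). lra. }
  assert (S2 : exists t3, t2 <= t3 /\ rho t3 <= rs + d).
  { apply NNPP. intros Hno.
    assert (Hall : forall t, t2 <= t -> rs + d < rho t).
    { intros t Ht. destruct (Rlt_or_le (rs + d) (rho t)); auto. exfalso; apply Hno; eauto. }
    set (t := t2 + (rho t2 - rs) / cu + 1).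
    assert (Hpos : 0 <= (rho t2 - rs) / cu) by (apply Rdiv_le_0_compat; [pose proof (Hall t2); lra| lra]).
    assert (rho t - rho t2 <= (- cu) * (t - t2)).
    { apply (mvt_upper rho drho t2 t (- cu)). unfold t; lra. apply Hder; lra.
      intros s Hs. apply Habove. lra. left; apply Hall; lra. }
    assert (cu * (t - t2) = rho t2 - rs + cu) by (unfold t; field; neq).
    assert (Htt : t2 <= t) by (unfold t; lra). pose proof (Hall t Htt). lra. }
  destruct S2 as [t3 [Ht3 Hr3]].
  assert (S4 : forall t, t3 <= t -> rho t <= rs + d).
  { intros t Ht. assert (rho t - (rs + d) <= 0); [| lra].
    replace (rho t - (rs + d)) with (- (rs + d) + 1 * rho t) by ring.
    apply (barrier (fun s => - (rs + d) + 1 * rho s) (fun s => 1 * drho s) t3 t Ht).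
    - intros s Hs. apply is_derive_lin. apply Hd; lra.
    - lra.
    - intros s Hs Hp. pose proof (Habove s ltac:(lra) ltac:(lra)). lra. }
  exists t3. intros t Ht. unfold rs in *. fold sD.
  assert (rs - d <= rho t <= rs + d) by (split; [apply S3; lra| apply S4; lra]).
  fold rs. apply Rabs_def1; lra.
Qed.

Lemma mono_exp u v p q : mono u v p q = exp (p * ln u + q * ln v).
Proof. unfold mono, Rpower. rewrite exp_plus. f_equal; f_equal; ring. Qed.

Lemma mono_pos u v p q : 0 < mono u v p q.
Proof. rewrite mono_exp. apply exp_pos. Qed.

Lemma mono_plus u v a b p q : mono u v (a + p) (b + q) = mono u v a b * mono u v p q.
Proof. rewrite !mono_exp, <- exp_plus. f_equal. ring. Qed.

Lemma d_mono_u p q u0 v0 : 0 < u0 -> is_derive (fun u => mono u v0 p q) u0 (p * mono u0 v0 p q / u0).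
Proof.
  intros Hu. unfold mono, Rpower. auto_derive. auto. field. neq.
Qed.

Lemma d_mono_v p q u0 v0 : 0 < v0 -> is_derive (fun v => mono u0 v p q) v0 (q * mono u0 v0 p q / v0).
Proof.
  intros Hv. unfold mono, Rpower. auto_derive. auto. field. neq.
Qed.

Lemma rate1_id eps a1 b1 a1' b1' u v uA vA : 0 < eps ->
  (a1' - a1) * uA + (b1' - b1) * vA = ln (eps ^ 2) ->
  rate1 eps a1 b1 a1' b1' u v =
  - (eps * mono u v a1 b1) * (exp ((a1' - a1) * (ln u - uA) + (b1' - b1) * (ln v - vA)) - 1).
Proof.
  intros He Hl. unfold rate1.
  assert (Hm : mono u v a1' b1' = mono u v a1 b1 * mono u v (a1' - a1) (b1' - b1)).
  { rewrite <- mono_plus. f_equal; ring. }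
  assert (Hm2 : mono u v (a1' - a1) (b1' - b1) = exp ((a1' - a1) * (ln u - uA) + (b1' - b1) * (ln v - vA)) * eps ^ 2).
  { rewrite mono_exp. rewrite <- (exp_ln (eps ^ 2)) by (apply pow_lt; auto).
    rewrite <- exp_plus. f_equal. rewrite <- Hl. ring. }
  rewrite Hm, Hm2. field. neq.
Qed.

Lemma rate2_id eps a2 b2 a2' b2' u v uA vA : 0 < eps ->
  (a2' - a2) * uA + (b2' - b2) * vA = - ln (eps ^ 2) ->
  rate2 eps a2 b2 a2' b2' u v =
  - (/ eps * mono u v a2 b2) * (exp ((a2' - a2) * (ln u - uA) + (b2' - b2) * (ln v - vA)) - 1).
Proof.
  intros He Hl. unfold rate2.
  assert (Hm : mono u v a2' b2' = mono u v a2 b2 * mono u v (a2' - a2) (b2' - b2)).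
  { rewrite <- mono_plus. f_equal; ring. }
  assert (Hm2 : mono u v (a2' - a2) (b2' - b2) * eps ^ 2 = exp ((a2' - a2) * (ln u - uA) + (b2' - b2) * (ln v - vA))).
  { rewrite mono_exp. rewrite <- (exp_ln (eps ^ 2)) by (apply pow_lt; auto).
    rewrite <- exp_plus. f_equal. replace (ln (eps ^ 2)) with (- ((a2' - a2) * uA + (b2' - b2) * vA)) by (rewrite Hl; ring). ring. }
  rewrite Hm. replace (mono u v (a2' - a2) (b2' - b2)) with (exp ((a2' - a2) * (ln u - uA) + (b2' - b2) * (ln v - vA)) / eps ^ 2).
  field. neq. rewrite <- Hm2. field. neq.
Qed.

Lemma deriv_lnlin (x y : R -> R) t dx dy al be uA vA : 0 < x t -> 0 < y t ->
  is_derive x t dx -> is_derive y t dy ->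
  is_derive (fun s => al * (ln (x s) - uA) + be * (ln (y s) - vA)) t (al * (dx / x t) + be * (dy / y t)).
Proof.
  intros Hx Hy Dx Dy. apply is_derive_Reals in Dx. apply is_derive_Reals in Dy. apply is_derive_Reals.
  apply (derivable_pt_lim_plus (fun s => al * (ln (x s) - uA)) (fun s => be * (ln (y s) - vA))).
  - apply derivable_pt_lim_scal. replace (dx / x t) with (dx / x t - 0) by ring.
    apply (derivable_pt_lim_minus (fun s => ln (x s)) (fun _ => uA)). 2: apply derivable_pt_lim_const.
    replace (dx / x t) with (/ x t * dx) by (field; neq).
    apply (derivable_pt_lim_comp x ln). auto. apply derivable_pt_lim_ln. auto.
  - apply derivable_pt_lim_scal. replace (dy / y t) with (dy / y t - 0) by ring.
    apply (derivable_pt_lim_minus (fun s => ln (y s)) (fun _ => vA)). 2: apply derivable_pt_lim_const.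
    replace (dy / y t) with (/ y t * dy) by (field; neq).
    apply (derivable_pt_lim_comp y ln). auto. apply derivable_pt_lim_ln. auto.
Qed.

Lemma eig_alg X Y c1 c2 a1 b1 a2 b2 sg r m11 m12 m21 m22 J11 J12 J21 J22 w1 w2 lam :
  X <> 0 -> Y <> 0 -> a1 * b2 - a2 * b1 <> 0 -> (sg = 1 \/ sg = -1) ->
  m11 = - ((a1 ^ 2 / X + b1 ^ 2 / Y) * c1) ->
  m12 = - (sg * (a1 * a2 / X + b1 * b2 / Y) * c2) ->
  m21 = - (sg * (a1 * a2 / X + b1 * b2 / Y) * c1) ->
  m22 = - ((a2 ^ 2 / X + b2 ^ 2 / Y) * c2) ->
  J11 = - (c1 * a1 ^ 2 + c2 * a2 ^ 2) / X ->
  J12 = - (c1 * a1 * b1 + c2 * a2 * b2) / Y ->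
  J21 = - (c1 * a1 * b1 + c2 * a2 * b2) / X ->
  J22 = - (c1 * b1 ^ 2 + c2 * b2 ^ 2) / Y ->
  w1 = X * (b2 * sg - b1 * r) / (a1 * b2 - a2 * b1) ->
  w2 = Y * (a1 * r - a2 * sg) / (a1 * b2 - a2 * b1) ->
  lam = m11 + m12 * r ->
  m21 + (m22 - m11) * r - m12 * r ^ 2 = 0 ->
  J11 * w1 + J12 * w2 = lam * w1 /\ J21 * w1 + J22 * w2 = lam * w2 /\
  J11 + J22 = m11 + m22 /\ J11 * J22 - J12 * J21 = m11 * m22 - m12 * m21.
Proof.
  intros HX HY HD Hs E11 E12 E21 E22 F11 F12 F21 F22 W1 W2 L Q.
  assert (Hq : m21 + m22 * r = lam * r) by (rewrite L; nra).
  assert (I1 : J11 * w1 + J12 * w2 = X * (b2 * sg * (m11 + m12 * r) - b1 * (m21 + m22 * r)) / (a1 * b2 - a2 * b1)).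
  { subst. destruct Hs as [-> | ->]; field; auto. }
  assert (I2 : J21 * w1 + J22 * w2 = Y * (a1 * (m21 + m22 * r) - a2 * sg * (m11 + m12 * r)) / (a1 * b2 - a2 * b1)).
  { subst. destruct Hs as [-> | ->]; field; auto. }
  split; [| split; [| split]].
  - rewrite I1, Hq, <- L, W1. field. auto.
  - rewrite I2, Hq, <- L, W2. field. auto.
  - subst. field. auto.
  - subst. destruct Hs as [-> | ->]; field; auto.
Qed.

Lemma fl_mono {T} {F : (T -> Prop) -> Prop} {FF : Filter F} (u v : T -> R) U V p q :
  filterlim u F (locally U) -> filterlim v F (locally V) -> 0 < U -> 0 < V ->
  filterlim (fun t => mono (u t) (v t) p q) F (locally (mono U V p q)).
Proof. intros. unfold mono. apply fl_mult; apply fl_Rpower; auto. Qed.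

Ltac lim_tac2 := repeat first [ lim_step |
  match goal with
  | |- filterlim (fun t => mono (@?u t) (@?v t) _ _) _ _ => apply (fl_mono u v)
  end ].

Lemma fl_ev {T} {F : (T -> Prop) -> Prop} {FF : Filter F} (f : T -> R) l e :
  filterlim f F (locally l) -> 0 < e -> F (fun t => Rabs (f t - l) < e).
Proof.
  intros H He. pose proof (proj1 (filterlim_locally f l) H (mkposreal e He)) as H'.
  eapply filter_imp. 2: exact H'. intros t Ht. exact Ht.
Qed.

Lemma at_right_ev (P : R -> Prop) : at_right 0 P -> exists d, 0 < d /\ forall u, 0 < u < d -> P u.
Proof.
  intros [d Hd]. exists d. split. apply cond_pos. intros u Hu. apply Hd. 2: lra.
  unfold ball; simpl; unfold AbsRing_ball, abs, minus, plus, opp; simpl.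
  replace (u + - 0) with u by ring. rewrite Rabs_pos_eq; lra.
Qed.

Lemma Derive_mono_u p q u0 v0 : 0 < u0 -> Derive (fun u : R => mono u v0 p q) u0 = p * mono u0 v0 p q / u0.
Proof. intros. apply is_derive_unique, d_mono_u; auto. Qed.
Lemma Derive_mono_v p q u0 v0 : 0 < v0 -> Derive (fun v : R => mono u0 v p q) v0 = q * mono u0 v0 p q / v0.
Proof. intros. apply is_derive_unique, d_mono_v; auto. Qed.

Theorem proposition4p10 (a1 b1 a1' b1' a2 b2 a2' b2' eps : R)
  (ha1 : 0 <= a1) (hb1 : 0 <= b1) (ha1' : 0 <= a1') (hb1' : 0 <= b1')
  (ha2 : 0 <= a2) (hb2 : 0 <= b2) (ha2' : 0 <= a2') (hb2' : 0 <= b2')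
  (hv1 : a1' - a1 <> 0) (hv2 : a2' - a2 <> 0)
  (hs1 : -1 < (b1' - b1) / (a1' - a1) < 0)
  (hs2 : (b2' - b2) / (a2' - a2) < -1)
  (heps : 0 < eps < 1)
  (xA yA xD yD : R)
  (hA : 0 < xA /\ 0 < yA /\
        mono xA yA (a1' - a1) (b1' - b1) = eps ^ 2 /\
        mono xA yA (a2' - a2) (b2' - b2) = / eps ^ 2)
  (hD : 0 < xD /\ 0 < yD /\
        mono xD yD (a1' - a1) (b1' - b1) = eps ^ 2 /\
        mono xD yD (a2' - a2) (b2' - b2) = eps ^ 2)
  (x y : R -> R)
  (hpos : forall t, 0 <= t -> 0 < x t /\ 0 < y t)
  (hinit : x 0 = xD /\ y 0 = yD)
  (hcont0 : filterlim x (at_right 0) (locally xD) /\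
            filterlim y (at_right 0) (locally yD))
  (hode : forall t, 0 < t ->
     is_derive x t (fieldX a1 b1 a1' b1' a2 b2 a2' b2' eps (x t) (y t)) /\
     is_derive y t (fieldY a1 b1 a1' b1' a2 b2 a2' b2' eps (x t) (y t)))
  (hconv : is_lim x p_infty xA /\ is_lim y p_infty yA) :
  let J11 := Derive (fun u => fieldX a1 b1 a1' b1' a2 b2 a2' b2' eps u yA) xA in
  let J12 := Derive (fun v => fieldX a1 b1 a1' b1' a2 b2 a2' b2' eps xA v) yA in
  let J21 := Derive (fun u => fieldY a1 b1 a1' b1' a2 b2 a2' b2' eps u yA) xA in
  let J22 := Derive (fun v => fieldY a1 b1 a1' b1' a2 b2 a2' b2' eps xA v) yA in
  exists lslow lfast w1 w2 : R,
    lslow <> lfast /\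
    (J11 - lslow) * (J22 - lslow) - J12 * J21 = 0 /\
    (J11 - lfast) * (J22 - lfast) - J12 * J21 = 0 /\
    Rabs lslow < Rabs lfast /\
    (w1 <> 0 \/ w2 <> 0) /\
    J11 * w1 + J12 * w2 = lslow * w1 /\
    J21 * w1 + J22 * w2 = lslow * w2 /\
    exists s : R, (s = 1 \/ s = -1) /\
      is_lim (fun t => (x t - xA) / sqrt ((x t - xA) ^ 2 + (y t - yA) ^ 2))
             p_infty (s * w1 / sqrt (w1 ^ 2 + w2 ^ 2)) /\
      is_lim (fun t => (y t - yA) / sqrt ((x t - xA) ^ 2 + (y t - yA) ^ 2))
             p_infty (s * w2 / sqrt (w1 ^ 2 + w2 ^ 2)).
Proof.
  intros J11 J12 J21 J22.
  destruct hA as [xA0 [yA0 [hA1 hA2]]]. destruct hD as [xD0 [yD0 [hD1 hD2]]].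
  destruct hinit as [hx0 hy0]. destruct hcont0 as [hcx hcy]. destruct hconv as [hlx hly].
  destruct heps as [he0 he1].
  set (al1 := a1' - a1) in *. set (be1 := b1' - b1) in *.
  set (al2 := a2' - a2) in *. set (be2 := b2' - b2) in *.
  set (uA := ln xA). set (vA := ln yA).
  assert (Hle2 : ln (eps ^ 2) < 0).
  { rewrite <- ln_1. apply ln_increasing. apply pow_lt; auto. simpl. nra. }
  assert (Hl1 : al1 * uA + be1 * vA = ln (eps ^ 2)).
  { rewrite <- hA1, mono_exp, ln_exp. reflexivity. }
  assert (Hl2 : al2 * uA + be2 * vA = - ln (eps ^ 2)).
  { rewrite <- ln_Rinv by (apply pow_lt; auto). rewrite <- hA2, mono_exp, ln_exp. reflexivity. }
  assert (HlD1 : al1 * ln xD + be1 * ln yD = ln (eps ^ 2)).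
  { rewrite <- hD1, mono_exp, ln_exp. reflexivity. }
  assert (HlD2 : al2 * ln xD + be2 * ln yD = ln (eps ^ 2)).
  { rewrite <- hD2, mono_exp, ln_exp. reflexivity. }
  set (s1 := be1 / al1) in *. set (s2 := be2 / al2) in *.
  assert (Hbe1 : be1 = s1 * al1) by (unfold s1; field; auto).
  assert (Hbe2 : be2 = s2 * al2) by (unfold s2; field; auto).
  assert (Hal12 : al1 * al2 <> 0) by (apply Rmult_integral_contrapositive; auto).
  assert (Hsg : exists sg, (sg = 1 \/ sg = -1) /\ 0 < sg * (al1 * al2)).
  { destruct (Rlt_or_le 0 (al1 * al2)). exists 1; split; auto; lra.
    exists (-1); split; auto. assert (al1 * al2 < 0) by (destruct H; [auto| contradiction]). lra. }
  destruct Hsg as [sg [Hsg Hsgp]].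
  assert (Hsg2 : sg * sg = 1) by (destruct Hsg as [-> | ->]; ring).
  assert (Hs12 : 0 < s1 * s2) by nra.
  assert (HG12 : forall u v, 0 < u -> 0 < v -> 0 < sg * (al1 * al2 / u + be1 * be2 / v)).
  { intros u v Hu Hv. replace (sg * (al1 * al2 / u + be1 * be2 / v)) with
      ((sg * (al1 * al2)) * (/ u + (s1 * s2) * / v)) by (rewrite Hbe1, Hbe2; field; split; neq).
    apply Rmult_lt_0_compat; auto. assert (0 < / u) by (apply Rinv_0_lt_compat; auto).
    assert (0 < / v) by (apply Rinv_0_lt_compat; auto). nra. }
  set (Dl := al1 * be2 - al2 * be1).
  assert (HDl : Dl <> 0).
  { unfold Dl. rewrite Hbe1, Hbe2. replace (al1 * (s2 * al2) - al2 * (s1 * al1)) with ((al1 * al2) * (s2 - s1)) by ring.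
    apply Rmult_integral_contrapositive; split; auto. lra. }
  set (G11 := fun u v => al1 ^ 2 / u + be1 ^ 2 / v).
  set (G12 := fun u v => al1 * al2 / u + be1 * be2 / v).
  set (G22 := fun u v => al2 ^ 2 / u + be2 ^ 2 / v).
  set (C1 := fun u v => eps * mono u v a1 b1).
  set (C2 := fun u v => / eps * mono u v a2 b2).
  set (p0F := fun u v => al1 * (ln u - uA) + be1 * (ln v - vA)).
  set (qF := fun u v => al2 * (ln u - uA) + be2 * (ln v - vA)).
  set (caF := fun u v => - (G11 u v * C1 u v * hf (p0F u v))).
  set (cbF := fun u v => - (sg * G12 u v * C2 u v * hf (qF u v))).
  set (ccF := fun u v => - (sg * G12 u v * C1 u v * hf (p0F u v))).
  set (cdF := fun u v => - (G22 u v * C2 u v * hf (qF u v))).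
  set (phF := fun u v => G11 u v * C1 u v * (1 + exp (p0F u v))).
  set (Pf := fun t => sg * p0F (x t) (y t)).
  set (Qf := fun t => qF (x t) (y t)).
  set (dPf := fun t => caF (x t) (y t) * Pf t + cbF (x t) (y t) * Qf t).
  set (dQf := fun t => ccF (x t) (y t) * Pf t + cdF (x t) (y t) * Qf t).
  assert (HC1 : forall u v, 0 < C1 u v) by (intros; unfold C1; apply Rmult_lt_0_compat; auto; apply mono_pos).
  assert (HC2 : forall u v, 0 < C2 u v) by (intros; unfold C2; apply Rmult_lt_0_compat; [apply Rinv_0_lt_compat; auto| apply mono_pos]).
  assert (HG11 : forall u v, 0 < u -> 0 < v -> 0 <= G11 u v).
  { intros u v Hu Hv. unfold G11. assert (0 < / u) by (apply Rinv_0_lt_compat; auto).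
    assert (0 < / v) by (apply Rinv_0_lt_compat; auto). unfold Rdiv. pose proof (pow2_ge_0 al1). pose proof (pow2_ge_0 be1). nra. }
  assert (Hder : forall t, 0 < t -> is_derive Pf t (dPf t) /\ is_derive Qf t (dQf t)).
  { intros t Ht. destruct (hode t Ht) as [Dx Dy]. destruct (hpos t ltac:(lra)) as [Hxt Hyt].
    pose proof (deriv_lnlin x y t _ _ al1 be1 uA vA Hxt Hyt Dx Dy) as D1.
    pose proof (deriv_lnlin x y t _ _ al2 be2 uA vA Hxt Hyt Dx Dy) as D2.
    unfold fieldX, fieldY in D1, D2.
    rewrite (rate1_id eps a1 b1 a1' b1' (x t) (y t) uA vA he0 Hl1) in D1, D2.
    rewrite (rate2_id eps a2 b2 a2' b2' (x t) (y t) uA vA he0 Hl2) in D1, D2.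
    fold al1 be1 al2 be2 in D1, D2.
    rewrite !hf_spec in D1, D2.
    split.
    - unfold Pf. evar_last. apply is_derive_scal. exact D1.
      unfold dPf, caF, cbF, Pf, Qf, G11, G12, C1, C2, p0F, qF. simpl. field. split; neq.
    - unfold Qf. evar_last. exact D2.
      unfold dQf, ccF, cdF, Pf, Qf, G12, G22, C1, C2, p0F, qF.
      set (h1 := hf (al1 * (ln (x t) - uA) + be1 * (ln (y t) - vA))).
      set (h2 := hf (al2 * (ln (x t) - uA) + be2 * (ln (y t) - vA))).
      set (z1 := al1 * (ln (x t) - uA) + be1 * (ln (y t) - vA)).
      set (z2 := al2 * (ln (x t) - uA) + be2 * (ln (y t) - vA)).
      transitivity ((- (sg * (al1 * al2 / x t + be1 * be2 / y t) * (eps * mono (x t) (y t) a1 b1) * h1) *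
        (sg * z1)) + (- ((al2 ^ 2 / x t + be2 ^ 2 / y t) * (/ eps * mono (x t) (y t) a2 b2) * h2) * z2)).
      2: reflexivity.
      replace (- (sg * (al1 * al2 / x t + be1 * be2 / y t) * (eps * mono (x t) (y t) a1 b1) * h1) * (sg * z1))
        with (- ((al1 * al2 / x t + be1 * be2 / y t) * (eps * mono (x t) (y t) a1 b1) * h1) * z1 * (sg * sg)) by ring.
      rewrite Hsg2. field. split; neq. }
  assert (LIM : forall (F : (R -> Prop) -> Prop) (FF : Filter F) (X0 Y0 : R), 0 < X0 -> 0 < Y0 ->
    filterlim x F (locally X0) -> filterlim y F (locally Y0) ->
    filterlim (fun t => caF (x t) (y t)) F (locally (caF X0 Y0)) /\
    filterlim (fun t => cbF (x t) (y t)) F (locally (cbF X0 Y0)) /\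
    filterlim (fun t => ccF (x t) (y t)) F (locally (ccF X0 Y0)) /\
    filterlim (fun t => cdF (x t) (y t)) F (locally (cdF X0 Y0)) /\
    filterlim (fun t => p0F (x t) (y t)) F (locally (p0F X0 Y0)) /\
    filterlim (fun t => qF (x t) (y t)) F (locally (qF X0 Y0)) /\
    filterlim (fun t => phF (x t) (y t)) F (locally (phF X0 Y0))).
  { intros F FF X0 Y0 HX HY Lx Ly.
    unfold caF, cbF, ccF, cdF, phF, p0F, qF, G11, G12, G22, C1, C2.
    repeat split; lim_tac2; auto; try neq. }
  assert (Hp0D : p0F xD yD = 0) by (unfold p0F; replace (al1 * (ln xD - uA) + be1 * (ln yD - vA)) with ((al1 * ln xD + be1 * ln yD) - (al1 * uA + be1 * vA)) by ring; rewrite HlD1, Hl1; ring).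
  assert (HqD : qF xD yD = 2 * ln (eps ^ 2)) by (unfold qF; replace (al2 * (ln xD - uA) + be2 * (ln yD - vA)) with ((al2 * ln xD + be2 * ln yD) - (al2 * uA + be2 * vA)) by ring; rewrite HlD2, Hl2; ring).
  assert (HcbN : forall u v, 0 < u -> 0 < v -> cbF u v < 0).
  { intros u v Hu Hv. unfold cbF. pose proof (HG12 u v Hu Hv). pose proof (HC2 u v). pose proof (hf_pos (qF u v)).
    unfold G12. assert (0 < sg * (al1 * al2 / u + be1 * be2 / v) * C2 u v * hf (qF u v)).
    { apply Rmult_lt_0_compat; auto. apply Rmult_lt_0_compat; auto. } lra. }
  assert (HccN : forall u v, 0 < u -> 0 < v -> ccF u v < 0).
  { intros u v Hu Hv. unfold ccF. pose proof (HG12 u v Hu Hv). pose proof (HC1 u v). pose proof (hf_pos (p0F u v)).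
    unfold G12. assert (0 < sg * (al1 * al2 / u + be1 * be2 / v) * C1 u v * hf (p0F u v)).
    { apply Rmult_lt_0_compat; auto. apply Rmult_lt_0_compat; auto. } lra. }
  assert (Early : exists t1, 0 < t1 /\ 0 < Pf t1 /\ Qf t1 < 0).
  { destruct (LIM (at_right 0) _ xD yD xD0 yD0 hcx hcy) as [La [Lb [Lc [Ld [Lp [Lq _]]]]]].
    set (kap := cbF xD yD * qF xD yD).
    assert (Hkap : 0 < kap) by (unfold kap; rewrite HqD; pose proof (HcbN xD yD xD0 yD0); nra).
    assert (LdP : filterlim dPf (at_right 0) (locally kap)).
    { replace kap with (caF xD yD * (sg * p0F xD yD) + cbF xD yD * qF xD yD) by (unfold kap; rewrite Hp0D; ring).
      unfold dPf, Pf, Qf. apply fl_plus; apply fl_mult; auto. apply fl_mult; [apply fl_const| auto]. }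
    assert (LP : filterlim Pf (at_right 0) (locally 0)).
    { replace (locally 0) with (locally (sg * p0F xD yD)) by (rewrite Hp0D; f_equal; ring). unfold Pf. apply fl_mult; [apply fl_const| auto]. }
    assert (HqDn : qF xD yD < 0) by (rewrite HqD; lra).
    assert (Hk2 : 0 < kap / 2) by lra. assert (Hq2 : 0 < - qF xD yD / 2) by lra.
    destruct (at_right_ev _ (filter_and _ _ (fl_ev dPf kap (kap / 2) LdP Hk2) (fl_ev Qf (qF xD yD) (- qF xD yD / 2) Lq Hq2)))
      as [d1 [Hd1 Hev1]].
    set (t1 := d1 / 2).
    assert (Ht1 : 0 < t1) by (unfold t1; lra).
    assert (Hkt : 0 < kap * t1 / 4) by (apply Rdiv_lt_0_compat; [apply Rmult_lt_0_compat|]; lra).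
    destruct (at_right_ev _ (fl_ev Pf 0 (kap * t1 / 4) LP Hkt))
      as [d2 [Hd2 Hev2]].
    set (s := Rmin d2 t1 / 2).
    assert (Hs : 0 < s < d2 /\ s <= t1 / 2).
    { unfold s. pose proof (Rmin_l d2 t1). pose proof (Rmin_r d2 t1).
      assert (0 < Rmin d2 t1) by (apply Rmin_glb_lt; lra). lra. }
    assert (Hm : kap / 2 * (t1 - s) <= Pf t1 - Pf s).
    { apply (mvt_lower Pf dPf s t1 (kap / 2)). lra.
      intros u Hu. apply (proj1 (Hder u ltac:(lra))).
      intros u Hu. destruct (Hev1 u ltac:(unfold t1 in *; lra)) as [H1 _]. apply Rabs_def2 in H1. lra. }
    specialize (Hev2 s ltac:(lra)). rewrite Rminus_0_r in Hev2. apply Rabs_def2 in Hev2.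
    exists t1. split; auto. split.
    - assert (kap / 2 * (t1 - s) >= kap / 2 * (t1 / 2)) by (apply Rmult_ge_compat_l; lra). lra.
    - destruct (Hev1 t1 ltac:(unfold t1 in *; lra)) as [_ H2]. apply Rabs_def2 in H2. lra. }
  destruct Early as [t1 [Ht1 [HP1 HQ1]]].
  assert (Hxpos : forall t, 0 < t -> 0 < x t /\ 0 < y t) by (intros; apply hpos; lra).
  assert (Hcontx : forall c, 0 < c -> filterlim x (locally c) (locally (x c)) /\ filterlim y (locally c) (locally (y c))).
  { intros c Hc. destruct (hode c Hc) as [Dx Dy]. split; apply continuity_pt_filterlim; eapply deriv_cont; eauto. }
  assert (Inv : forall t, t1 <= t -> 0 < Pf t /\ Qf t < 0).
  { apply (invariance Pf Qf dPf dQf t1).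
    - intros s Hs. apply Hder. lra.
    - auto.
    - auto.
    - intros s Hs HP HQ. unfold dQf. rewrite HQ. destruct (Hxpos s ltac:(lra)).
      pose proof (HccN (x s) (y s) H H0). rewrite Rmult_0_r, Rplus_0_r.
      clear - H1 HP. nra.
    - intros T. destruct (Rle_or_lt t1 T) as [HT | HT].
      2: { exists 0. intros s Hs. lra. }
      destruct (continuity_ab_maj (fun t => phF (x t) (y t)) t1 T HT) as [Mx [HMx HMi]].
      { intros c Hc. apply continuity_pt_filterlim. destruct (Hxpos c ltac:(lra)). destruct (Hcontx c ltac:(lra)).
        apply (LIM (locally c) _ (x c) (y c)); auto. }
      exists (phF (x Mx) (y Mx)). intros s Hs HP HQ.
      specialize (HMx s Hs). destruct (Hxpos s ltac:(lra)) as [Hxs Hys].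
      unfold dPf. pose proof (HcbN (x s) (y s) Hxs Hys).
      assert (0 <= cbF (x s) (y s) * Qf s) by (clear - H HQ; nra).
      assert (- phF (x s) (y s) <= caF (x s) (y s)).
      { unfold phF, caF. pose proof (hf_le (p0F (x s) (y s))). pose proof (HG11 _ _ Hxs Hys). pose proof (HC1 (x s) (y s)).
        assert (0 <= G11 (x s) (y s) * C1 (x s) (y s)) by (apply Rmult_le_pos; lra).
        assert (G11 (x s) (y s) * C1 (x s) (y s) * hf (p0F (x s) (y s)) <= G11 (x s) (y s) * C1 (x s) (y s) * (1 + exp (p0F (x s) (y s))))
          by (apply Rmult_le_compat_l; auto). lra. }
      assert (- phF (x Mx) (y Mx) * Pf s <= caF (x s) (y s) * Pf s) by (apply Rmult_le_compat_r; lra).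
      lra. }
  destruct (LIM (Rbar_locally p_infty) _ xA yA xA0 yA0 hlx hly) as [Ia [Ib [Ic [Id [Ip [Iq _]]]]]].
  set (rho := fun t => Qf t / Pf t).
  set (Ar := - cbF xA yA). set (Br := cdF xA yA - caF xA yA). set (Cr := ccF xA yA).
  assert (HAr : 0 < Ar) by (unfold Ar; pose proof (HcbN xA yA xA0 yA0); lra).
  assert (HCr : Cr < 0) by (unfold Cr; apply HccN; auto).
  assert (Ric : is_lim rho p_infty ((- Br - sqrt (Br ^ 2 - 4 * Ar * Cr)) / (2 * Ar))).
  { apply (riccati rho (fun t => (dQf t * Pf t - Qf t * dPf t) / Pf t ^ 2)
      (fun t => ccF (x t) (y t)) (fun t => cdF (x t) (y t) - caF (x t) (y t)) (fun t => - cbF (x t) (y t)) Ar Br Cr t1).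
    - exact HAr.
    - exact HCr.
    - intros t Ht. unfold rho. apply is_derive_div. apply (Hder t ltac:(lra)). apply (Hder t ltac:(lra)).
      pose proof (Inv t Ht). lra.
    - intros t Ht. unfold rho. destruct (Inv t Ht). apply Rdiv_neg_pos; lra.
    - intros t Ht. unfold rho, dPf, dQf. destruct (Inv t Ht). field. lra.
    - unfold is_lim. exact Ic.
    - unfold is_lim. apply fl_minus; [exact Id | exact Ia].
    - unfold is_lim. apply fl_opp; exact Ib. }
  set (Sq := sqrt (Br ^ 2 - 4 * Ar * Cr)).
  set (rs := (- Br - Sq) / (2 * Ar)) in Ric.
  assert (HD0 : 0 < Br ^ 2 - 4 * Ar * Cr) by (clear - HAr HCr; pose proof (pow2_ge_0 Br); nra).
  assert (HSq2 : Sq * Sq = Br ^ 2 - 4 * Ar * Cr) by (apply sqrt_sqrt; lra).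
  assert (HSq0 : 0 < Sq) by (apply sqrt_lt_R0; lra).
  assert (Hquad : Cr + Br * rs - (- Ar) * rs ^ 2 = 0).
  { unfold rs. replace (Cr + Br * ((- Br - Sq) / (2 * Ar)) - - Ar * ((- Br - Sq) / (2 * Ar)) ^ 2)
      with ((Sq * Sq - (Br ^ 2 - 4 * Ar * Cr)) / (4 * Ar)) by (field; lra). rewrite HSq2. field. lra. }
  assert (Hp0A : p0F xA yA = 0) by (unfold p0F, uA, vA; ring).
  assert (Hq0A : qF xA yA = 0) by (unfold qF, uA, vA; ring).
  set (c1 := C1 xA yA). set (c2 := C2 xA yA).
  assert (E11 : caF xA yA = - ((al1 ^ 2 / xA + be1 ^ 2 / yA) * c1)) by (unfold caF; rewrite Hp0A, hf_0; unfold G11, c1; ring).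
  assert (E12 : cbF xA yA = - (sg * (al1 * al2 / xA + be1 * be2 / yA) * c2)) by (unfold cbF; rewrite Hq0A, hf_0; unfold G12, c2; ring).
  assert (E21 : ccF xA yA = - (sg * (al1 * al2 / xA + be1 * be2 / yA) * c1)) by (unfold ccF; rewrite Hp0A, hf_0; unfold G12, c1; ring).
  assert (E22 : cdF xA yA = - ((al2 ^ 2 / xA + be2 ^ 2 / yA) * c2)) by (unfold cdF; rewrite Hq0A, hf_0; unfold G22, c2; ring).
  assert (HmA1 : mono xA yA a1' b1' = mono xA yA a1 b1 * eps ^ 2).
  { replace (mono xA yA a1' b1') with (mono xA yA (a1 + al1) (b1 + be1)) by (f_equal; unfold al1, be1; ring).
    rewrite mono_plus, hA1. ring. }
  assert (HmA2 : mono xA yA a2' b2' = mono xA yA a2 b2 * / eps ^ 2).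
  { replace (mono xA yA a2' b2') with (mono xA yA (a2 + al2) (b2 + be2)) by (f_equal; unfold al2, be2; ring).
    rewrite mono_plus, hA2. ring. }
  assert (EJ11 : J11 = - (c1 * al1 ^ 2 + c2 * al2 ^ 2) / xA).
  { unfold J11. apply is_derive_unique. unfold fieldX, rate1, rate2. auto_derive.
    - repeat split; eexists; apply d_mono_u; exact xA0.
    - rewrite !Derive_mono_u by exact xA0.
      rewrite HmA1, HmA2. unfold c1, c2, C1, C2, al1, al2. field. split; neq. }
  assert (EJ12 : J12 = - (c1 * al1 * be1 + c2 * al2 * be2) / yA).
  { unfold J12. apply is_derive_unique. unfold fieldX, rate1, rate2. auto_derive.
    - repeat split; eexists; apply d_mono_v; exact yA0.
    - rewrite !Derive_mono_v by exact yA0.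
      rewrite HmA1, HmA2. unfold c1, c2, C1, C2, al1, al2, be1, be2. field. split; neq. }
  assert (EJ21 : J21 = - (c1 * al1 * be1 + c2 * al2 * be2) / xA).
  { unfold J21. apply is_derive_unique. unfold fieldY, rate1, rate2. auto_derive.
    - repeat split; eexists; apply d_mono_u; exact xA0.
    - rewrite !Derive_mono_u by exact xA0.
      rewrite HmA1, HmA2. unfold c1, c2, C1, C2, al1, al2, be1, be2. field. split; neq. }
  assert (EJ22 : J22 = - (c1 * be1 ^ 2 + c2 * be2 ^ 2) / yA).
  { unfold J22. apply is_derive_unique. unfold fieldY, rate1, rate2. auto_derive.
    - repeat split; eexists; apply d_mono_v; exact yA0.
    - rewrite !Derive_mono_v by exact yA0.
      rewrite HmA1, HmA2. unfold c1, c2, C1, C2, be1, be2. field. split; neq. }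
  set (w1 := xA * (be2 * sg - be1 * rs) / (al1 * be2 - al2 * be1)).
  set (w2 := yA * (al1 * rs - al2 * sg) / (al1 * be2 - al2 * be1)).
  set (lslow := caF xA yA + cbF xA yA * rs).
  set (lfast := caF xA yA + cdF xA yA - lslow).
  assert (Hc1 : 0 < c1) by apply HC1. assert (Hc2 : 0 < c2) by apply HC2.
  destruct (eig_alg xA yA c1 c2 al1 be1 al2 be2 sg rs (caF xA yA) (cbF xA yA) (ccF xA yA) (cdF xA yA)
     J11 J12 J21 J22 w1 w2 lslow) as [Ev1 [Ev2 [Htr Hdet]]]; auto; try neq.
  all: try (rewrite <- Hquad; unfold Ar, Br, Cr; ring).
  assert (Hdiff : lslow - lfast = Sq).
  { unfold lfast, lslow. replace (cbF xA yA) with (- Ar) by (unfold Ar; ring).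
    replace (caF xA yA + - Ar * rs - (caF xA yA + cdF xA yA - (caF xA yA + - Ar * rs))) with (- Br - 2 * Ar * rs) by (unfold Br; ring).
    unfold rs. field. lra. }
  assert (Hprod : lslow * lfast = caF xA yA * cdF xA yA - cbF xA yA * ccF xA yA).
  { unfold lfast, lslow. transitivity (caF xA yA * cdF xA yA - cbF xA yA * ccF xA yA + cbF xA yA * (Cr + Br * rs - - Ar * rs ^ 2)).
    unfold Ar, Br, Cr. ring. rewrite Hquad. ring. }
  assert (HG11A : 0 < al1 ^ 2 / xA + be1 ^ 2 / yA).
  { assert (0 < al1 ^ 2 / xA) by (apply Rdiv_lt_0_compat; auto; apply pow2_gt_0; auto).
    assert (0 <= be1 ^ 2 / yA) by (apply Rdiv_le_0_compat; auto; apply pow2_ge_0). lra. }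
  assert (HG22A : 0 < al2 ^ 2 / xA + be2 ^ 2 / yA).
  { assert (0 < al2 ^ 2 / xA) by (apply Rdiv_lt_0_compat; auto; apply pow2_gt_0; auto).
    assert (0 <= be2 ^ 2 / yA) by (apply Rdiv_le_0_compat; auto; apply pow2_ge_0). lra. }
  assert (Htrn : caF xA yA + cdF xA yA < 0).
  { rewrite E11, E22. assert (0 < (al1 ^ 2 / xA + be1 ^ 2 / yA) * c1) by (apply Rmult_lt_0_compat; auto).
    assert (0 < (al2 ^ 2 / xA + be2 ^ 2 / yA) * c2) by (apply Rmult_lt_0_compat; auto). lra. }
  assert (Hdetp : 0 < caF xA yA * cdF xA yA - cbF xA yA * ccF xA yA).
  { rewrite E11, E12, E21, E22.
    replace (- ((al1 ^ 2 / xA + be1 ^ 2 / yA) * c1) * - ((al2 ^ 2 / xA + be2 ^ 2 / yA) * c2) -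
      - (sg * (al1 * al2 / xA + be1 * be2 / yA) * c2) * - (sg * (al1 * al2 / xA + be1 * be2 / yA) * c1))
      with (c1 * c2 * (Dl ^ 2 / (xA * yA))).
    2: { unfold Dl. destruct Hsg as [-> | ->]; field; split; neq. }
    apply Rmult_lt_0_compat. apply Rmult_lt_0_compat; auto.
    apply Rdiv_lt_0_compat. apply pow2_gt_0; auto. apply Rmult_lt_0_compat; auto. }
  assert (Hls : lslow < 0 /\ lfast < lslow).
  { assert (lslow + lfast = caF xA yA + cdF xA yA) by (unfold lfast; ring).
    split; [| lra]. destruct (Rlt_or_le lslow 0) as [Hl0|Hl0]; auto.
    assert (Hf0 : lfast < 0) by lra. assert (lslow * lfast <= 0) by (clear - Hl0 Hf0; nra). lra. }

  exists lslow, lfast, w1, w2.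
  split; [lra|]. split.
  { transitivity (lslow ^ 2 - lslow * (J11 + J22) + (J11 * J22 - J12 * J21)). ring.
    rewrite Htr, Hdet. unfold lslow. transitivity (- (cbF xA yA) * (Cr + Br * rs - - Ar * rs ^ 2)).
    unfold Ar, Br, Cr. ring. rewrite Hquad. ring. }
  split.
  { transitivity (lfast ^ 2 - lfast * (J11 + J22) + (J11 * J22 - J12 * J21)). ring.
    rewrite Htr, Hdet. unfold lfast, lslow. transitivity (- (cbF xA yA) * (Cr + Br * rs - - Ar * rs ^ 2)).
    unfold Ar, Br, Cr. ring. rewrite Hquad. ring. }
  split.
  { rewrite !Rabs_left by lra. lra. }
  assert (Hw : w1 <> 0 \/ w2 <> 0).
  { apply NNPP. intros Hn. apply HDl.
    assert (Hw1 : w1 = 0) by (apply NNPP; intro; apply Hn; auto).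
    assert (Hw2 : w2 = 0) by (apply NNPP; intro; apply Hn; auto).
    unfold w1 in Hw1. unfold w2 in Hw2. fold Dl in Hw1, Hw2.
    assert (Z1 : be2 * sg - be1 * rs = 0).
    { apply Rmult_eq_reg_l with (xA / Dl). 2: { apply Rmult_integral_contrapositive; split; [neq| apply Rinv_neq_0_compat; auto]. }
      rewrite Rmult_0_r. rewrite <- Hw1. field. auto. }
    assert (Z2 : al1 * rs - al2 * sg = 0).
    { apply Rmult_eq_reg_l with (yA / Dl). 2: { apply Rmult_integral_contrapositive; split; [neq| apply Rinv_neq_0_compat; auto]. }
      rewrite Rmult_0_r. rewrite <- Hw2. field. auto. }
    assert (sg * Dl = 0).
    { transitivity (al1 * (be2 * sg - be1 * rs) + be1 * (al1 * rs - al2 * sg)). unfold Dl. ring. rewrite Z1, Z2. ring. }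
    destruct Hsg as [-> | ->]; lra. }
  split; [exact Hw|]. split; [exact Ev1|]. split; [exact Ev2|].
  exists 1. split; [left; reflexivity|].
  set (Xt := fun t => xA * hf (ln (x t) - uA) * (be2 * sg - be1 * rho t) / Dl).
  set (Yt := fun t => yA * hf (ln (y t) - vA) * (al1 * rho t - al2 * sg) / Dl).
  assert (Hrep : forall t, t1 <= t -> x t - xA = Pf t * Xt t /\ y t - yA = Pf t * Yt t).
  { intros t Ht. destruct (Inv t Ht) as [HPt HQt]. destruct (Hxpos t ltac:(lra)) as [Hxt Hyt].
    assert (HL1 : ln (x t) - uA = Pf t * (be2 * sg - be1 * rho t) / Dl).
    { unfold rho, Pf, Qf in *. unfold p0F, qF in *. unfold Dl.
      destruct Hsg as [-> | ->]; field; split; try neq; auto. }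
    assert (HL2 : ln (y t) - vA = Pf t * (al1 * rho t - al2 * sg) / Dl).
    { unfold rho, Pf, Qf in *. unfold p0F, qF in *. unfold Dl.
      destruct Hsg as [-> | ->]; field; split; try neq; auto. }
    split.
    - unfold Xt. replace (x t - xA) with (xA * (exp (ln (x t) - uA) - 1)).
      rewrite hf_spec, HL1. field. auto.
      unfold Rminus at 2. rewrite exp_plus. unfold uA. rewrite exp_Ropp, !exp_ln by auto. field. neq.
    - unfold Yt. replace (y t - yA) with (yA * (exp (ln (y t) - vA) - 1)).
      rewrite hf_spec, HL2. field. auto.
      unfold Rminus at 2. rewrite exp_plus. unfold vA. rewrite exp_Ropp, !exp_ln by auto. field. neq. }
  assert (Hfun : forall t, t1 <= t ->
     Xt t / sqrt (Xt t ^ 2 + Yt t ^ 2) = (x t - xA) / sqrt ((x t - xA) ^ 2 + (y t - yA) ^ 2) /\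
     Yt t / sqrt (Xt t ^ 2 + Yt t ^ 2) = (y t - yA) / sqrt ((x t - xA) ^ 2 + (y t - yA) ^ 2)).
  { intros t Ht. destruct (Hrep t Ht) as [-> ->]. destruct (Inv t Ht) as [HPt _].
    replace ((Pf t * Xt t) ^ 2 + (Pf t * Yt t) ^ 2) with (Pf t ^ 2 * (Xt t ^ 2 + Yt t ^ 2)) by ring.
    rewrite sqrt_mult_alt by (apply pow2_ge_0). rewrite sqrt_pow2 by lra.
    unfold Rdiv. rewrite !Rinv_mult. split.
    - replace (Pf t * Xt t * (/ Pf t * / sqrt (Xt t ^ 2 + Yt t ^ 2))) with (Xt t * / sqrt (Xt t ^ 2 + Yt t ^ 2) * (Pf t * / Pf t)) by ring.
      rewrite Rinv_r by lra. ring.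
    - replace (Pf t * Yt t * (/ Pf t * / sqrt (Xt t ^ 2 + Yt t ^ 2))) with (Yt t * / sqrt (Xt t ^ 2 + Yt t ^ 2) * (Pf t * / Pf t)) by ring.
      rewrite Rinv_r by lra. ring. }
  assert (HW1 : w1 = xA * hf (ln xA - uA) * (be2 * sg - be1 * rs) / Dl).
  { unfold uA. rewrite Rminus_diag, hf_0, Rmult_1_r. reflexivity. }
  assert (HW2 : w2 = yA * hf (ln yA - vA) * (al1 * rs - al2 * sg) / Dl) by (unfold vA; rewrite Rminus_diag, hf_0, Rmult_1_r; reflexivity).
  assert (Hsq : 0 < sqrt (w1 ^ 2 + w2 ^ 2)).
  { apply sqrt_lt_R0. destruct Hw as [Hw | Hw].
    - pose proof (pow2_gt_0 w1 Hw). pose proof (pow2_ge_0 w2). lra.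
    - pose proof (pow2_gt_0 w2 Hw). pose proof (pow2_ge_0 w1). lra. }
  split.
  - apply (is_lim_ext_loc (fun t => Xt t / sqrt (Xt t ^ 2 + Yt t ^ 2))).
    { exists t1. intros t Ht. apply (proj1 (Hfun t ltac:(lra))). }
    rewrite Rmult_1_l. unfold is_lim. rewrite HW1 at 1. rewrite HW1, HW2 in Hsq. rewrite HW1, HW2.
    unfold Xt, Yt. lim_tac2; try exact hlx; try exact hly; try exact Ric; auto; try neq.
  - apply (is_lim_ext_loc (fun t => Yt t / sqrt (Xt t ^ 2 + Yt t ^ 2))).
    { exists t1. intros t Ht. apply (proj2 (Hfun t ltac:(lra))). }
    rewrite Rmult_1_l. unfold is_lim. rewrite HW2 at 1. rewrite HW1, HW2 in Hsq. rewrite HW1, HW2.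
    unfold Xt, Yt. lim_tac2; try exact hlx; try exact hly; try exact Ric; auto; try neq.
Qed.
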